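(* Let $\Gamma$ be a simple, undirected, connected graph of order $p\ge 2$, minimum degree $\delta$ and maximum degree $\Delta$. Then $$\gamma_{[3R]}(\Gamma)\le \left\lfloor \frac{4p}{\delta+1}\left(\ln\left(\frac{3(\delta+1)}{4}\right)+1\right)\right\rfloor.$$
   Context: For a graph $\Gamma=(V,E)$ and $h:V\to\{0,1,2,3,4\}$, let $AN(v)=\{w\in N(v):h(w)\ge 1\}$, $AN[v]=AN(v)\cup\{v\}$ and $h(S)=\sum_{u\in S}h(u)$. $h$ is a triple Roman dominating function (3RDF) if every $v$ with $h(v)<3$ satisfies $h(AN[v])\ge|AN(v)|+3$. The triple Roman domination number $\gamma_{[3R]}(\Gamma)$ is the minimum weight $h(V)$ of a 3RDF of $\Gamma$. *)

(* Defs.v *)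
From mathcomp Require Import all_boot.
From Stdlib Require Import Reals ZArith.
Set Implicit Arguments. Unset Strict Implicit. Unset Printing Implicit Defensive.

Section TripleRoman.
Variables (T : finType) (e : rel T).

Definition simple_graph : Prop := symmetric e /\ irreflexive e.
Definition connected_graph : Prop := forall x y : T, connect e x y.

Definition degree (v : T) : nat := #|[set w | e v w]|.
(* minimum degree; #|T| exceeds every degree, so it is a neutral start value *)
Definition min_degree : nat := \big[minn/#|T|]_(v : T) degree v.

Definition AN (h : {ffun T -> 'I_5}) (v : T) : {set T} :=
  [set w | e v w && (1 <= h w)].
Definition ANc (h : {ffun T -> 'I_5}) (v : T) : {set T} := v |: AN h v.
Definition hsum (h : {ffun T -> 'I_5}) (S : {set T}) : nat :=
  \sum_(u in S) (h u : nat).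
Definition weight (h : {ffun T -> 'I_5}) : nat := \sum_(u : T) (h u : nat).

Definition is3RDF (h : {ffun T -> 'I_5}) : bool :=
  [forall v, (h v < 3) ==> (#|AN h v| + 3 <= hsum h (ANc h v))].

(* minimum weight of a 3RDF; every weight is <= 4 #|T| and the constant 4
   function is a 3RDF, so the start value 4 #|T| does not affect the min *)
Definition gamma3R : nat :=
  \big[minn/4 * #|T|]_(h : {ffun T -> 'I_5} | is3RDF h) weight h.

End TripleRoman.

(* Main.v *)
Require Import Defs.
From mathcomp Require Import all_boot.
From Stdlib Require Import Reals ZArith.
From Stdlib Require Import Lra Lia.
From mathcomp Require Import zify.

Section Real.
Local Open Scope R_scope.

Lemma ln_div' (a b : R) : 0 < a -> 0 < b -> ln (a / b) = ln a - ln b.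
Proof. move=> Ha Hb. rewrite /Rdiv ln_mult ?ln_Rinv //; try lra; by apply Rinv_0_lt_compat. Qed.

Lemma ln_diff_ge (a b : R) : 0 < a -> 0 < b -> 1 - b / a <= ln a - ln b.
Proof.
move=> Ha Hb.
have H := exp_ineq1_le (ln (b / a)).
rewrite exp_ln in H; last by apply Rdiv_lt_0_compat.
rewrite ln_div' in H => //; lra.
Qed.

Definition phi (N r u : R) : R :=
  let s := 4 * N / (3 * r) in
  match Rle_dec u s with left _ => 3 * u | right _ => 3 * s + 4 * N / r * (ln u - ln s) end.

Lemma phi_step (N r u m : R) : 0 < N -> 0 < r -> 2 <= m -> m <= u ->
  r * u <= m * N -> phi N r (u - m) + 4 <= phi N r u.
Proof.
move=> HN Hr Hm Hmu Hru.
have Hs : 0 < 4 * N / (3 * r) by apply Rdiv_lt_0_compat; lra.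
set s := 4 * N / (3 * r) in Hs.
set c := 4 * N / r.
have Hcs : c = 3 * s by rewrite /c /s; field; lra.
have Hu : 0 < u by lra.
have Hcm : 4 * u <= c * m.
  rewrite /c. apply (Rmult_le_reg_r r) => //.
  replace (4 * N / r * m * r) with (4 * (m * N)) by (field; lra). lra.
rewrite /phi -/s -/c.
destruct (Rle_dec u s) as [H1|H1]; destruct (Rle_dec (u - m) s) as [H2|H2]; try lra.
- (* u > s >= u - m *)
  have L := ln_diff_ge _ _ Hu Hs.
  have Hb : 0 < u - s by lra.
  have K : c * (1 - s / u) >= 4 * (u - s) / m.
    replace (c * (1 - s / u)) with ((c / u) * (u - s)) by (field; lra).
    apply Rle_ge. apply (Rmult_le_reg_r m); first lra.
    replace (4 * (u - s) / m * m) with (4 * (u-s)) by (field; lra).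
    replace (c / u * (u - s) * m) with ((c * m) / u * (u - s)) by (field; lra).
    apply Rmult_le_compat_r; first lra.
    apply (Rmult_le_reg_r u) => //.
    replace (c * m / u * u) with (c * m) by (field; lra). lra.
  have K2 : 3 * (s - (u - m)) + 4 * (u - s) / m >= 4.
    apply Rle_ge. apply (Rmult_le_reg_r m); first lra.
    replace ((3 * (s - (u - m)) + 4 * (u - s) / m) * m) with (3 * (s - (u - m)) * m + 4 * (u - s)) by (field; lra).
    nra.
  have : c * (1 - s / u) <= c * (ln u - ln s).
    apply Rmult_le_compat_l => //. rewrite Hcs; lra.
  lra.
- have Hum : 0 < u - m by lra.
  have L := ln_diff_ge _ _ Hu Hum.
  have : c * (1 - (u - m) / u) <= c * (ln u - ln (u - m)).
    apply Rmult_le_compat_l => //. rewrite Hcs; lra.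
  replace (c * (1 - (u - m) / u)) with (c * m / u) by (field; lra).
  have : 4 <= c * m / u.
    apply (Rmult_le_reg_r u) => //.
    replace (c * m / u * u) with (c * m) by (field; lra). lra.
  lra.
Qed.

Lemma phi_small (N r u : R) : 0 < r -> 0 <= N -> r * u <= N -> phi N r u = 3 * u.
Proof.
move=> Hr HN H. rewrite /phi.
destruct (Rle_dec u (4 * N / (3 * r))) as [|H1] => //.
exfalso; apply H1.
apply (Rmult_le_reg_l r) => //.
replace (r * (4 * N / (3 * r))) with (4 * N / 3) by (field; lra). lra.
Qed.

Lemma phi_top (N r : R) : 0 < N -> 2 <= r ->
  phi N r N = 4 * N / r * (ln (3 * r / 4) + 1).
Proof.
move=> HN Hr. rewrite /phi.
destruct (Rle_dec N (4 * N / (3 * r))) as [H1|H1].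
- exfalso.
  have : r * N <= r * (4 * N / (3 * r)) by apply Rmult_le_compat_l; lra.
  replace (r * (4 * N / (3 * r))) with (4 * N / 3) by (field; lra). nra.
- rewrite -ln_div'; [|lra|apply Rdiv_lt_0_compat; lra].
  replace (N / (4 * N / (3 * r))) with (3 * r / 4) by (field; lra).
  field; lra.
Qed.

End Real.

Lemma INR3 : INR 3 = 3%R. Proof. simpl; ring. Qed.
Lemma INR4 : INR 4 = 4%R. Proof. simpl; ring. Qed.

Lemma INR_mul4 (a : nat) : INR (4 * a) = (4 * INR a)%R.
Proof. by rewrite -multE mult_INR INR4. Qed.

Lemma bigmin_le (I : eqType) (r : seq I) (P : pred I) (F : I -> nat) a x :
  x \in r -> P x -> \big[minn/a]_(i <- r | P i) F i <= F x.
Proof.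
move=> + HP; elim: r => //= y r IH; rewrite inE big_cons; case/orP => [/eqP <-| Hx].
  by rewrite HP geq_minl.
case: (P y); last exact: IH.
exact: leq_trans (geq_minr _ _) (IH Hx).
Qed.

Section C.
Variables (T : finType) (e : rel T).
Hypothesis (He : simple_graph e).

Definition Nc (v : T) : {set T} := [set w | (w == v) || e v w].
Definition Und (A : {set T}) : {set T} := [set v | [disjoint Nc v & A]].
Definition hA (A : {set T}) : {ffun T -> 'I_5} :=
  [ffun v => if v \in A then inord 4 else if v \in Und A then inord 3 else ord0].

Lemma Nc_sym x y : (x \in Nc y) = (y \in Nc x).
Proof.
case: He => Hs _. rewrite !inE eq_sym Hs. done.
Qed.

Lemma card_Nc v : (degree e v).+1 = #|Nc v|.
Proof.
case: He => _ Hi.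
have -> : Nc v = v |: [set w | e v w].
  apply/setP => w; rewrite !inE. done.
rewrite cardsU1 inE Hi. done.
Qed.

Lemma hA_3RDF A : is3RDF e (hA A).
Proof.
case: He => Hs Hi.
apply/forallP => v; apply/implyP => Hv3.
have HvA : (v \in A) = false.
  apply/negbTE/negP => H; move: Hv3; by rewrite /hA ffunE H inordK.
have HvU : (v \in Und A) = false.
  apply/negbTE/negP => H; move: Hv3; by rewrite /hA ffunE H HvA inordK.
move: HvU; rewrite inE => /negbT; rewrite -setI_eq0 => /set0Pn [a].
rewrite inE => /andP [Ha1 Ha2].
have Hav : a != v by apply/eqP => Hav; subst; rewrite Ha2 in HvA.
move: Ha1; rewrite inE (negbTE Hav) /= => Hva.
have HaAN : a \in AN e (hA A) v.
  by rewrite inE Hva /hA ffunE Ha2 inordK.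
rewrite /hsum /ANc.
rewrite (bigD1 a) /=; last by rewrite inE HaAN orbT.
rewrite {2}/hA ffunE Ha2 inordK //=.
rewrite (cardD1 a) HaAN add1n.
idtac.
rewrite addSn -addnS [_ + 4]addnC leq_add2l.
apply: leq_trans (_ : \sum_(i in [predD1 AN e (hA A) v & a]) 1 <= _).
  by rewrite sum1_card.
rewrite [X in _ <= X](bigID (fun i => i \in AN e (hA A) v)) /=.
apply: leq_trans (leq_addr _ _).
rewrite big_mkcond [X in _ <= X]big_mkcond /=.
apply: leq_sum => i _.
rewrite !inE.
case: (i == a) => //=; case: (e v i) => //=; case E: (0 < hA A i) => //=.
by rewrite orbT /=.
Qed.

Lemma weight_hA A : weight (hA A) = 4 * #|A| + 3 * #|Und A|.
Proof.
have Hd : forall v, v \in A -> v \notin Und A.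
  move=> v HvA; rewrite inE; apply/negP => H.
  by rewrite (disjointFr H) // inE eqxx in HvA.
rewrite /weight.
rewrite (eq_bigr (fun v => (if v \in A then 4 else 0) + (if v \in Und A then 3 else 0))); last first.
  move=> v _; rewrite /hA ffunE.
  case: ifP => H1; first by rewrite (negbTE (Hd _ H1)) inordK.
  by case: ifP => H2; rewrite ?inordK.
rewrite big_split /= -!big_mkcond /= !sum_nat_const /= mulnC [3 * _]mulnC.
done.
Qed.

Lemma gamma_le h : is3RDF e h -> gamma3R e <= weight h.
Proof. move=> H; rewrite /gamma3R; apply: bigmin_le => //; exact: mem_index_enum. Qed.

Lemma mindeg_le v : min_degree e <= degree e v.
Proof. rewrite /min_degree; apply: bigmin_le => //; exact: mem_index_enum. Qed.

Hypothesis (Hc : connected_graph e) (Hn : 2 <= #|T|).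

Lemma degree_pos v : 0 < degree e v.
Proof.
have : 0 < #|predC1 v| by rewrite cardC1; case: #|T| Hn => [|[|k]].
case/card_gt0P => w; rewrite !inE => Hwv.
move: (Hc v w) => /connectP [[|a p] /=]; first by move=> _ H; rewrite H eqxx in Hwv.
case/andP => Hva _ _.
apply/card_gt0P; exists a; by rewrite inE.
Qed.

Lemma mindeg_pos : 0 < min_degree e.
Proof.
rewrite /min_degree; apply: (big_ind (fun x => 0 < x)).
- by case: #|T| Hn.
- by move=> x y Hx Hy; rewrite leq_min Hx Hy.
- by move=> v _; apply: degree_pos.
Qed.

Lemma count_cover (U : {set T}) :
  #|U| * (min_degree e).+1 <= \sum_x #|Nc x :&: U|.
Proof.
have E : \sum_x #|Nc x :&: U| = \sum_(y in U) #|Nc y|.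
  transitivity (\sum_x \sum_y ((y \in Nc x) && (y \in U) : nat)).
    apply: eq_bigr => x _. rewrite -sum1_card big_mkcond /=.
    by apply: eq_bigr => y _; rewrite inE; case: (_ && _).
  rewrite exchange_big /= [RHS]big_mkcond /=.
  apply: eq_bigr => y _.
  case: (boolP (y \in U)) => Hy.
    rewrite -sum1_card [RHS]big_mkcond /=.
    by apply: eq_bigr => x _; rewrite andbT Nc_sym; case: (_ \in _).
  by rewrite big1 // => x _; rewrite andbF.
rewrite E -sum_nat_const.
apply: leq_sum => y _.
by rewrite -card_Nc ltnS mindeg_le.
Qed.

Lemma Und_U1 x A : Und (x |: A) = Und A :\: Nc x.
Proof.
apply/setP => v; rewrite !inE disjoint_sym.
rewrite (@eq_disjoint _ _ (predU1 x (mem A))); last by move=> w; rewrite !inE.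
rewrite disjointU1 disjoint_sym -Nc_sym.
rewrite [v \in Nc x]inE andbC; congr (_ && _); apply: eq_disjoint_r => w; by rewrite inE.
Qed.

Lemma step A :
  (#|Und A| * (min_degree e).+1 <= #|T|) \/
  exists x, let m := #|Nc x :&: Und A| in
    [/\ 2 <= m, #|Und A| * (min_degree e).+1 <= m * #|T|,
        #|Und (x |: A)| = #|Und A| - m & m <= #|Und A|].
Proof.
have : 0 < #|T| by case: #|T| Hn.
case/card_gt0P => x0 _.
set F := fun x => #|Nc x :&: Und A|.
case: (@arg_maxnP _ x0 predT F isT) => x _ Hmax.
have Hsum : \sum_y F y <= #|T| * F x.
  rewrite -sum_nat_const; apply: leq_sum => y _; exact: Hmax.
have Hcc := count_cover (Und A).
case: (leqP (F x) 1) => Hm.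
  left. apply: leq_trans Hcc _. apply: leq_trans Hsum _.
  by rewrite -{2}(muln1 #|T|) leq_mul2l Hm orbT.
right; exists x => /=; split => //.
- by apply: leq_trans Hcc _; rewrite mulnC.
- by rewrite Und_U1 cardsD setIC.
- by apply: subset_leq_card; apply: subsetIr.
Qed.

Lemma greedy k : forall A : {set T}, #|Und A| <= k ->
  exists A' : {set T}, (INR (4 * #|A'| + 3 * #|Und A'|) <=
     INR (4 * #|A|) + phi (INR #|T|) (INR (min_degree e) + 1) (INR #|Und A|))%R.
Proof.
have HN : (0 < INR #|T|)%R by apply: lt_0_INR; apply/ltP; case: #|T| Hn.
have Hr : (0 < INR (min_degree e) + 1)%R by have := pos_INR (min_degree e); lra.
elim: k => [|k IH] A HA; case: (step A) => [H|[x [Hm H1 H2 H3]]].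
- exists A. rewrite phi_small //; last 2 first.
  + lra.
  + move/leP: H => /le_INR; rewrite mult_INR S_INR; lra.
  + rewrite plus_INR !mult_INR INR3 INR4; lra.
- exfalso; move: (leq_trans (leq_trans Hm H3) HA); done.
- exists A. rewrite phi_small //; last 2 first.
  + lra.
  + move/leP: H => /le_INR; rewrite mult_INR S_INR; lra.
  + rewrite plus_INR !mult_INR INR3 INR4; lra.
- set m := #|Nc x :&: Und A| in Hm H1 H2 H3.
  have HU : #|Und (x |: A)| <= k.
    rewrite H2; clear -HA Hm H3; lia.
  case: (IH _ HU) => A' HA'.
  exists A'. apply: (Rle_trans _ _ _ HA').
  have Hx : #|x |: A| <= #|A|.+1 by rewrite cardsU1; case: (x \notin A).
  move/leP/le_INR: Hx; rewrite S_INR => Hx.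
  rewrite H2 minus_INR; last exact/leP.
  have Hs := @phi_step (INR #|T|) (INR (min_degree e) + 1) (INR #|Und A|) (INR m) HN Hr.
  have Hm' : (2 <= INR m)%R by move/leP/le_INR: Hm.
  have Hmu : (INR m <= INR #|Und A|)%R by move/leP/le_INR: H3.
  have Hru : ((INR (min_degree e) + 1) * INR #|Und A| <= INR m * INR #|T|)%R.
    move/leP/le_INR: H1; rewrite !mult_INR S_INR; lra.
  have := Hs Hm' Hmu Hru.
  rewrite !INR_mul4; lra.
Qed.

End C.

Lemma Und0 (T : finType) (e : rel T) : #|Und T e set0| = #|T|.
Proof.
rewrite -cardsT; apply: eq_card => v; rewrite !inE -setI_eq0 setI0 eqxx //.
Qed.

Theorem proposition11 (T : finType) (e : rel T) :
  simple_graph e -> connected_graph e -> 2 <= #|T| ->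
  (Z.of_nat (gamma3R e) <=
   Int_part (4 * INR #|T| / (INR (min_degree e) + 1) *
             (ln (3 * (INR (min_degree e) + 1) / 4) + 1)))%Z.
Proof.
move=> He Hc Hn.
have [A' HA'] := @greedy T e He Hn _ set0 (leqnn _).
rewrite cards0 muln0 Und0 phi_top in HA'; last first.
  have := @mindeg_pos T e Hc Hn => /leP /le_INR; rewrite /= => H; lra.
  by apply: lt_0_INR; apply/ltP; case: #|T| Hn.
have Hg : gamma3R e <= 4 * #|A'| + 3 * #|Und T e A'|.
  by rewrite -(weight_hA T e); apply: gamma_le; apply: hA_3RDF.
move/leP/le_INR: Hg => Hg.
set B := (4 * INR #|T| / (INR (min_degree e) + 1) * (ln (3 * (INR (min_degree e) + 1) / 4) + 1))%R in HA' *.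
have HgB : (INR (gamma3R e) <= B)%R.
  apply: (Rle_trans _ _ _ Hg); apply: (Rle_trans _ _ _ HA').
  simpl; lra.
have [H1 H2] := base_Int_part B.
rewrite INR_IZR_INZ in HgB.
have : (IZR (Z.of_nat (gamma3R e)) < IZR (Int_part B + 1))%R by rewrite plus_IZR; lra.
move/lt_IZR; lia.
Qed.
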